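(* Let $\mathcal{X}_{k-1}\subset\mathbb{R}^n$ and $\mathcal{W}_{k-1}\subset\mathbb{R}^q$ be constrained zonotopes and $u_{k-1}\in\mathbb{R}^p$ a fixed vector. Let $f:\mathbb{R}^n\times\mathbb{R}^p\times\mathbb{R}^q\to\mathbb{R}^n$ and write it as $\varrho^{\rm f}:\mathbb{R}^{n+p+q}\to\mathbb{R}^n$, $\varrho^{\rm f}(z)=f(x,u,w)$ for $z=[x^\top\ u^\top\ w^\top]^\top$. Let $\mathcal{Z}_{k-1}=\mathcal{X}_{k-1}\times\{u_{k-1}\}\times\mathcal{W}_{k-1}$, let $\mathcal{P}_{k-1}\supseteq\mathcal{Z}_{k-1}$ be a convex polytope, and suppose $\varrho^{\rm f}=\varrho^{\rm fa}-\varrho^{\rm fb}$ on $\mathcal{P}_{k-1}$ where $\varrho^{\rm fa},\varrho^{\rm fb}:\mathbb{R}^{n+p+q}\to\mathbb{R}^n$ are differentiable and componentwise convex on $\mathcal{P}_{k-1}$. Let $\bar z=[\bar x^\top\ u_{k-1}^\top\ \bar w^\top]^\top\in\mathcal{P}_{k-1}$, let $F=\nabla_z\varrho^{\rm f}(\bar z)$, $F^{\rm x}=\nabla_x\varrho^{\rm f}(\bar z)$, $F^{\rm w}=\nabla_w\varrho^{\rm f}(\bar z)$, and define the linearizations $\bar\varrho(z)=\varrho^{\rm f}(\bar z)+F(z-\bar z)$, $\bar\varrho^{\rm a}(z)=\varrho^{\rm fa}(\bar z)+\nabla_z\varrho^{\rm fa}(\bar z)(z-\bar z)$, $\bar\varrho^{\rm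 b}(z)=\varrho^{\rm fb}(\bar z)+\nabla_z\varrho^{\rm fb}(\bar z)(z-\bar z)$. For $i=1,\ldots,n$ let $$e^-_i=\min_{z\in\mathrm{vert}(\mathcal{P}_{k-1})}\big(\bar\varrho^{\rm a}_i(z)-\varrho^{\rm fb}_i(z)-\bar\varrho_i(z)\big),\qquad e^+_i=\max_{z\in\mathrm{vert}(\mathcal{P}_{k-1})}\big(\varrho^{\rm fa}_i(z)-\bar\varrho^{\rm b}_i(z)-\bar\varrho_i(z)\big),$$ and let $\mathcal{R}_{k-1}$ be the zonotope $\{\mathrm{diag}(\tfrac12(e^+-e^-)),\tfrac12(e^-+e^+)\}$, i.e. the box $[e^-,e^+]$. Then $$\{f(x,u_{k-1},w):x\in\mathcal{X}_{k-1},\ w\in\mathcal{W}_{k-1}\}\subseteq\mathcal{X}_{k|k-1}:=\big(\varrho^{\rm f}(\bar z)-F^{\rm x}\bar x-F^{\rm w}\bar w\big)\oplus F^{\rm x}\mathcal{X}_{k-1}\oplus F^{\rm w}\mathcal{W}_{k-1}\oplus\mathcal{R}_{k-1},$$ and $\mathcal{X}_{k|k-1}$ is a constrained zonotope.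
   Context: A constrained zonotope (CZ) is a set $\{G,c,A,b\}=\{G\xi+c:\xi\in[-1,1]^{n_g},\ A\xi=b\}$ with $G\in\mathbb{R}^{n\times n_g}$, $c\in\mathbb{R}^n$, $A\in\mathbb{R}^{n_h\times n_g}$, $b\in\mathbb{R}^{n_h}$; a zonotope $\{G,c\}$ has no equality constraints. $\oplus$ denotes Minkowski sum (a vector is treated as a singleton), $L\mathcal{X}=\{Lx:x\in\mathcal{X}\}$, $\times$ is the Cartesian product, and $\mathrm{vert}(\mathcal{P})$ is the (finite) vertex set of a polytope $\mathcal{P}$. For a vector-valued function, ''convex'' means each component is convex; $\nabla_x$ denotes the Jacobian with respect to the block $x$ of the argument. *)

(* Defs.v *)
From HB Require Import structures.
From mathcomp Require Import all_boot all_order all_algebra.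
From mathcomp Require Import all_classical all_reals all_analysis.
Set Implicit Arguments. Unset Strict Implicit. Unset Printing Implicit Defensive.
Import Order.TTheory GRing.Theory Num.Theory.
Import numFieldNormedType.Exports.
Local Open Scope classical_set_scope.
Local Open Scope ring_scope.

Record CZ (R : realType) (n : nat) := MkCZ {
  cz_ng : nat;
  cz_nh : nat;
  cz_G : 'M[R]_(n, cz_ng);
  cz_c : 'cV[R]_n;
  cz_A : 'M[R]_(cz_nh, cz_ng);
  cz_b : 'cV[R]_cz_nh }.

Definition czset (R : realType) (n : nat) (Z : CZ R n) : set 'cV[R]_n :=
  [set cz_G Z *m xi + cz_c Z | xi in
     [set xi : 'cV[R]_(cz_ng Z) | (forall j, -1 <= xi j 0 <= 1) /\ cz_A Z *m xi = cz_b Z]].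

Definition zonotope (R : realType) (n ng : nat) (G : 'M[R]_(n, ng)) (c : 'cV[R]_n) : CZ R n :=
  @MkCZ R n ng 0 G c 0 0.

Definition mink_sum (R : realType) (n : nat) (A B : set 'cV[R]_n) : set 'cV[R]_n :=
  [set a + b | a in A & b in B].
Definition lin_img (R : realType) (m n : nat) (L : 'M[R]_(m, n)) (A : set 'cV[R]_n) : set 'cV[R]_m :=
  [set L *m a | a in A].

Definition conv_hull (R : realType) (N : nat) (S : set 'cV[R]_N) : set 'cV[R]_N :=
  [set x | exists (m : nat) (lam : 'I_m -> R) (v : 'I_m -> 'cV[R]_N),
     (forall i, 0 <= lam i) /\ \sum_(i < m) lam i = 1 /\ (forall i, S (v i)) /\
     x = \sum_(i < m) lam i *: v i].

Definition polytope (R : realType) (N : nat) (P : set 'cV[R]_N) : Prop :=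
  exists V : seq 'cV[R]_N, P = conv_hull [set` V].

Definition vert (R : realType) (N : nat) (P : set 'cV[R]_N) : set 'cV[R]_N :=
  [set z | P z /\ forall z1 z2 (t : R), P z1 -> P z2 -> 0 < t < 1 ->
              z = t *: z1 + (1 - t) *: z2 -> z1 = z2].

Definition cw_convex_on (R : realType) (N n : nat) (g : 'cV[R]_N -> 'cV[R]_n)
    (P : set 'cV[R]_N) : Prop :=
  forall (i : 'I_n) z1 z2 (t : R), P z1 -> P z2 -> 0 <= t <= 1 ->
    g (t *: z1 + (1 - t) *: z2) i 0 <= t * g z1 i 0 + (1 - t) * g z2 i 0.

Definition jac (R : realType) (N n : nat) (g : 'cV[R]_N -> 'cV[R]_n) (z : 'cV[R]_N)
    : 'M[R]_(n, N) :=
  \matrix_(i < n, j < N) ('d g z (delta_mx j 0)) i 0.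

(* Main.v *)
Require Import Defs.
From HB Require Import structures.
From mathcomp Require Import all_boot all_order all_algebra.
From mathcomp Require Import all_classical all_reals all_analysis.
From mathcomp Require Import ring lra.
Set Implicit Arguments. Unset Strict Implicit. Unset Printing Implicit Defensive.
Import Order.TTheory GRing.Theory Num.Theory.
Import numFieldNormedType.Exports.
Local Open Scope classical_set_scope.
Local Open Scope ring_scope.
Section Cvx.
Variable R : realType.
Variable N : nat.
Implicit Types (C S : set 'cV[R]_N).

Definition ccvx C := forall x y (s : R), C x -> C y -> 0 < s < 1 ->
  C (s *: x + (1 - s) *: y).

Lemma comb_mem C x y (a : R) : ccvx C -> 0 <= a <= 1 ->
  (0 < a -> C x) -> (a < 1 -> C y) -> C (a *: x + (1 - a) *: y).
Proof.
move=> cC /andP[a0 a1] Hx Hy.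
have [ae|an0] := eqVneq a 0.
  by subst a; rewrite scale0r add0r subr0 scale1r; apply: Hy; exact: ltr01.
have [ae|an1] := eqVneq a 1.
  by subst a; rewrite subrr scale0r addr0 scale1r; apply: Hx; exact: ltr01.
apply: cC; first (apply: Hx; by rewrite lt_neqAle eq_sym an0).
  by apply: Hy; rewrite lt_neqAle an1.
by rewrite lt_neqAle eq_sym an0 a0 lt_neqAle an1 a1.
Qed.

Lemma hull_sub S : S `<=` conv_hull S.
Proof.
move=> x Sx; exists 1%N, (fun _ => 1), (fun _ => x); split => //.
split; first by rewrite big_ord1.
by split => //; rewrite big_ord1 scale1r.
Qed.

Lemma hull_min C S : ccvx C -> S `<=` C -> conv_hull S `<=` C.
Proof.
move=> cC SC x [m [lam [v [l0 [l1 [Sv ->]]]]]].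
elim: m lam v l0 l1 Sv => [|m IH] lam v l0 l1 Sv.
  by move: l1; rewrite big_ord0 => /eqP; rewrite eq_sym oner_eq0.
rewrite big_ord_recr /=; rewrite big_ord_recr /= in l1.
set s := \sum_(i < m) lam (widen_ord (leqnSn m) i) in l1 *.
have s0 : 0 <= s by apply: sumr_ge0 => i _; exact: l0.
have [s_eq0|s_ne0] := eqVneq s 0.
  have all0 := psumr_eq0P (fun i _ => l0 (widen_ord (leqnSn m) i)) s_eq0.
  rewrite big1; last by move=> i _; rewrite all0 // scale0r.
  move: l1; rewrite s_eq0 add0r => ->; rewrite add0r scale1r; exact: SC.
have sp : 0 < s by rewrite lt_neqAle eq_sym s_ne0 s0.
set y := \sum_(i < m) (lam (widen_ord (leqnSn m) i) / s) *: v (widen_ord (leqnSn m) i).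
have -> : \sum_(i < m) lam (widen_ord (leqnSn m) i) *: v (widen_ord (leqnSn m) i)
   = s *: y.
  rewrite /y scaler_sumr; apply: eq_bigr => i _; rewrite scalerA.
  by rewrite mulrCA divff // mulr1.
have -> : lam ord_max = 1 - s by rewrite -l1 addrAC subrr add0r.
apply: comb_mem => //.
- by rewrite s0 /= -l1 lerDl l0.
- move=> _; apply: IH.
  + by move=> i; apply: divr_ge0 => //; exact: l0.
  + by rewrite -mulr_suml divff.
  + by move=> i; exact: Sv.
- by move=> _; apply: SC; exact: Sv.
Qed.

Lemma hull_ccvx S : ccvx (conv_hull S).
Proof.
move=> x y s [m1 [l1 [v1 [l10 [l11 [Sv1 ->]]]]]] [m2 [l2 [v2 [l20 [l21 [Sv2 ->]]]]]] /andP[s0 s1].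
exists (m1 + m2)%N.
exists (fun k => match fintype.split k with inl i => s * l1 i | inr j => (1 - s) * l2 j end).
exists (fun k => match fintype.split k with inl i => v1 i | inr j => v2 j end).
have sl (i : 'I_m1) : fintype.split (lshift m2 i) = inl i by exact: (unsplitK (inl _ i)).
have sr (j : 'I_m2) : fintype.split (rshift m1 j) = inr j by exact: (unsplitK (inr _ j)).
split.
  move=> k; case: (fintype.split k) => i; apply: mulr_ge0 => //; first exact: ltW.
  by rewrite subr_ge0 ltW.
split.
  rewrite big_split_ord /=; under eq_bigr do rewrite sl.
  under [X in _ + X = _]eq_bigr do rewrite sr.
  by rewrite -!mulr_sumr l11 l21 !mulr1 addrC subrK.
split; first by move=> k; case: (fintype.split k) => i.
rewrite big_split_ord /=; under [X in _ = X + _]eq_bigr do rewrite sl.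
under [X in _ = _ + X]eq_bigr do rewrite sr.
by rewrite !scaler_sumr; congr (_ + _); apply: eq_bigr => i _; rewrite scalerA.
Qed.

End Cvx.
Section Vert.
Variable R : realType.
Variable N : nat.
Implicit Types (C S : set 'cV[R]_N).

Lemma scal_both (s a b : R) : 0 < s < 1 -> 0 <= a <= 1 -> 0 <= b <= 1 ->
  s * a + (1 - s) * b = 1 -> a = 1 /\ b = 1.
Proof.
move=> /andP[s0 s1] /andP[a0 a1] /andP[b0 b1] e.
have h1 : 0 <= s * (1 - a) by apply: mulr_ge0; [exact: ltW|rewrite subr_ge0].
have h2 : 0 <= (1 - s) * (1 - b) by apply: mulr_ge0; rewrite subr_ge0 // ltW.
have h3 : s * (1 - a) + (1 - s) * (1 - b) = 0.
  have -> : s * (1 - a) + (1 - s) * (1 - b) = 1 - (s * a + (1 - s) * b) by ring.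
  by rewrite e subrr.
have := h3; move/eqP; rewrite paddr_eq0 // => /andP[/eqP e1 /eqP e2].
move: e1 e2 => /eqP; rewrite mulf_eq0 (gt_eqF s0) /= subr_eq0 => /eqP <-.
move/eqP; rewrite mulf_eq0 subr_eq0 eq_sym (lt_eqF s1) /= subr_eq0 => /eqP <-.
by [].
Qed.

Lemma mix_lemma (v y1 y2 : 'cV[R]_N) (s a b c al : R) : 0 < s < 1 -> 0 <= a <= 1 ->
  0 <= b <= 1 -> c = s * a + (1 - s) * b -> c < 1 -> al = s * (1 - a) / (1 - c) ->
  [/\ s *: (a *: v + (1 - a) *: y1) + (1 - s) *: (b *: v + (1 - b) *: y2)
      = c *: v + (1 - c) *: (al *: y1 + (1 - al) *: y2),
      0 <= c <= 1, 0 <= al <= 1, (0 < al -> a < 1) & (al < 1 -> b < 1)].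
Proof.
move=> /andP[s0 s1] /andP[a0 a1] /andP[b0 b1] ec cl1 eal.
have c1 : 0 < 1 - c by rewrite subr_gt0.
have cn : 1 - c != 0 by rewrite gt_eqF.
have e1 : 1 - al = (1 - s) * (1 - b) / (1 - c).
  by apply: (mulIf cn); rewrite eal mulrBl mul1r !mulfVK // ec; ring.
have h1 : 0 <= s * (1 - a) by apply: mulr_ge0; [exact: ltW|rewrite subr_ge0].
have h2 : 0 <= (1 - s) * (1 - b) by apply: mulr_ge0; rewrite subr_ge0 // ltW.
split.
- apply/matrixP => i k; rewrite !mxE e1 eal.
  move: cn; rewrite ec => cn; field; exact: cn.
- apply/andP; split; last exact: ltW.
  rewrite ec; apply: addr_ge0; apply: mulr_ge0 => //;
    [exact: ltW | by rewrite subr_ge0 ltW].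
- apply/andP; split; first by rewrite eal divr_ge0 //; exact: ltW.
  rewrite -subr_ge0 e1 divr_ge0 //; exact: ltW.
- move=> alp; rewrite lt_neqAle a1 andbT; apply/eqP => ae.
  by move: alp; rewrite eal ae subrr mulr0 mul0r ltxx.
- move=> all1; rewrite lt_neqAle b1 andbT; apply/eqP => be.
  by move: all1; rewrite -subr_gt0 e1 be subrr mulr0 mul0r ltxx.
Qed.

Lemma removal m (v : 'I_m.+1 -> 'cV[R]_N) j :
  ~ vert (conv_hull (range v)) (v j) ->
  conv_hull (range v) = conv_hull (range (fun k : 'I_m => v (lift j k))).
Proof.
move=> nv.
set P := conv_hull (range v).
set C' := conv_hull (range (fun k : 'I_m => v (lift j k))).
have cC' : ccvx C' by exact: hull_ccvx.
apply/seteqP; split; last first.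
  apply: hull_min; first exact: hull_ccvx.
  by move=> _ [k _ <-]; apply: hull_sub; exists (lift j k).
set D := [set z | exists a y, 0 <= a <= 1 /\ (a < 1 -> C' y) /\
                   z = a *: v j + (1 - a) *: y].
have PD : P `<=` D.
  apply: hull_min.
    move=> z1 z2 s [a [y1 [a01 [Hy1 ->]]]] [b [y2 [b01 [Hy2 ->]]]] s01.
    have [ce|cl] := eqVneq (s * a + (1 - s) * b) 1.
      have [-> ->] := scal_both s01 a01 b01 ce.
      exists 1, 0; split; first by rewrite lexx ler01.
      split; first by rewrite ltxx.
      by rewrite !subrr !scale0r !addr0 !scale1r -scalerDl addrC subrK scale1r.
    have cl1 : s * a + (1 - s) * b < 1.
      rewrite lt_neqAle cl /=; case/andP: s01 => s0 s1; case/andP: a01 => a0 a1;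
      case/andP: b01 => b0 b1; nra.
    have [E c01 al01 H1 H2] := mix_lemma (v j) y1 y2 s01 a01 b01 (erefl _) cl1 (erefl _).
    rewrite E; eexists; eexists; split; first exact: c01.
    split; last by [].
    move=> _; apply: comb_mem => //.
      by move=> /H1; exact: Hy1.
    by move=> /H2; exact: Hy2.
  move=> _ [k _ <-].
  have [->|njk] := eqVneq k j.
    exists 1, 0; split; first by rewrite lexx ler01.
    by split; [rewrite ltxx | rewrite subrr scale0r addr0 scale1r].
  case: (unliftP j k) => [k' ->|ejk]; last by rewrite ejk eqxx in njk.
  exists 0, (v (lift j k')); split; first by rewrite lexx ler01.
  split; first by move=> _; apply: hull_sub; exists k'.
  by rewrite scale0r add0r subr0 scale1r.
have C'vj : C' (v j).
  apply: contrapT => nC; apply: nv; split; first by apply: hull_sub; exists j.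
  move=> z1 z2 t Pz1 Pz2 t01 Hv.
  have [a [y1 [a01 [Hy1 E1]]]] := PD _ Pz1.
  have [b [y2 [b01 [Hy2 E2]]]] := PD _ Pz2.
  have t01' : 0 < t < 1 by [].
  have [ce|cl] := eqVneq (t * a + (1 - t) * b) 1.
    have [ea eb] := scal_both t01' a01 b01 ce.
    by rewrite E1 E2 ea eb !subrr !scale0r.
  have cl1 : t * a + (1 - t) * b < 1.
    rewrite lt_neqAle cl /=; case/andP: t01 => s0 s1; case/andP: a01 => a0 a1;
    case/andP: b01 => b0 b1; nra.
  have [E c01 al01 H1 H2] := mix_lemma (v j) y1 y2 t01' a01 b01 (erefl _) cl1 (erefl _).
  exfalso; apply: nC.
  move: Hv; rewrite E1 E2 E.
  set c := t * a + (1 - t) * b; set w := (_ *: y1 + _ *: y2) => Hv.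
  have -> : v j = w.
    have cn : 1 - c != 0 by rewrite subr_eq0 eq_sym.
    apply: (scalerI cn); apply: (addrI (c *: v j)).
    by rewrite -Hv -scalerDl addrC subrK scale1r.
  apply: comb_mem => //.
    by move=> /H1; exact: Hy1.
  by move=> /H2; exact: Hy2.
move=> x /PD [a [y [a01 [Hy ->]]]].
by apply: comb_mem => //.
Qed.

End Vert.
Section Fam.
Variable R : realType.
Variable N : nat.

Lemma vert_family m (v : 'I_m -> 'cV[R]_N) : exists m' (v' : 'I_m' -> 'cV[R]_N),
  conv_hull (range v) = conv_hull (range v') /\
  forall j, vert (conv_hull (range v)) (v' j).
Proof.
elim: m v => [|m IH] v.
  by exists 0%N, v; split => // -[].
have [allv|] := pselect (forall j, vert (conv_hull (range v)) (v j)).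
  by exists m.+1, v.
move=> /existsNP [j nj].
have E := removal nj.
have [m' [v' [E' V']]] := IH (fun k : 'I_m => v (lift j k)).
by exists m', v'; rewrite E; split => //; rewrite E'.
Qed.

Lemma seq_family (V : seq 'cV[R]_N) :
  [set` V] = range (fun i : 'I_(size V) => nth 0 V i).
Proof.
apply/seteqP; split.
  move=> x /= xV.
  have xi : (index x V < size V)%N by rewrite index_mem.
  by exists (Ordinal xi) => //=; rewrite nth_index.
by move=> _ [i _ <-] /=; apply: mem_nth.
Qed.

Lemma vert_range m (v : 'I_m -> 'cV[R]_N) x :
  vert (conv_hull (range v)) x -> range v x.
Proof.
move=> [Px ex]; apply: contrapT => nr.
set C := [set y | conv_hull (range v) y /\ y <> x].
have cC : ccvx C.
  move=> y1 y2 s [P1 n1] [P2 n2] s01; split; first exact: hull_ccvx.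
  move=> E; have e12 := ex _ _ _ P1 P2 s01 (esym E).
  by apply: n1; rewrite -E -e12 -scalerDl addrC subrK scale1r.
have PC := hull_min cC (fun y ry => conj (hull_sub ry) (fun e => nr (eq_ind _ (fun w => range v w) ry _ e))).
by case: (PC _ Px).
Qed.

Lemma max_principle m (v : 'I_m -> 'cV[R]_N) (phi : 'cV[R]_N -> R) z :
  (forall z1 z2 t, conv_hull (range v) z1 -> conv_hull (range v) z2 -> 0 <= t <= 1 ->
     phi (t *: z1 + (1 - t) *: z2) <= t * phi z1 + (1 - t) * phi z2) ->
  conv_hull (range v) z -> exists j, phi z <= phi (v j).
Proof.
move=> cvx Pz.
case: (boolP [exists j, phi z <= phi (v j)]) => [/existsP [j hj]|/existsPn H].
  by exists j.
set C := [set y | conv_hull (range v) y /\ phi y < phi z].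
have cC : ccvx C.
  move=> y1 y2 s [P1 h1] [P2 h2] /andP[s0 s1]; split.
    by apply: hull_ccvx => //; rewrite s0.
  apply: le_lt_trans (cvx _ _ _ P1 P2 _) _; first by rewrite ltW // ltW.
  nra.
have PC : conv_hull (range v) `<=` C.
  apply: (hull_min cC) => _ [j _ <-].
  by split; [apply: hull_sub; exists j | rewrite ltNge H].
have : C z by exact: PC.
by case=> _; rewrite ltxx.
Qed.

End Fam.
Section Anal.
Variable R : realType.
Variables N n : nat.

Lemma jac_mul (g : 'cV[R]_N -> 'cV[R]_n) z d : jac g z *m d = 'd g z d.
Proof.
apply/matrixP => i k; rewrite (ord1 k) !mxE.
rewrite {2}(matrix_sum_delta d) linear_sum summxE; apply: eq_bigr => j _.
by rewrite big_ord1 linearZ !mxE /= mulrC.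

Qed.

Lemma grad_ineq (g : 'cV[R]_N -> 'cV[R]_n) (P : set 'cV[R]_N) zb z i :
  differentiable g zb -> cw_convex_on g P -> P zb -> P z ->
  g zb i 0 + (jac g zb *m (z - zb)) i 0 <= g z i 0.
Proof.
move=> dg cv Pzb Pz; rewrite jac_mul -lerBrDl.
set d := z - zb.
have hd : derivable g zb d := diff_derivable dg.
have hD : 'D_d g zb = 'd g zb d by exact: deriveE.
rewrite -hD.
have cv1 : (fun h : R => h^-1 *: ((g \o shift zb) (h *: d) - g zb)) @ 0^'+ --> 'D_d g zb.
  by apply: cvg_dnbhs_at_right; exact: hd.
have cl : closed [set M : 'cV[R]_n | M i 0 <= g z i 0 - g zb i 0].
  apply: (@closed_comp _ _ (fun M : 'cV[R]_n => M i 0) [set x | x <= g z i 0 - g zb i 0]).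
    by move=> M _; exact: coord_continuous.
  exact: closed_le.
apply: (closed_cvg _ cl _ _ cv1).
near=> h.
have h0 : 0 < h by near: h; exact: nbhs_right_gt.
have h1 : h < 1 by near: h; exact: nbhs_right_lt; exact: ltr01.
rewrite /= !mxE.
have e : h *: d + zb = h *: z + (1 - h) *: zb.
  by apply/matrixP => a b; rewrite /d !mxE; ring.
rewrite e.
have := cv i z zb h Pz Pzb; rewrite (ltW h0) (ltW h1) => /(_ isT) H.
rewrite ler_pdivrMl //.
rewrite mulrBr; move: H; set A := g _ i 0; set B := g z i 0; set Cc := g zb i 0; move=> H.
lra.
Unshelve. all: by end_near.
Qed.

End Anal.
Section Misc.
Variable R : realType.

Lemma fin_bounds N m (v : 'I_m -> 'cV[R]_N) (A : set 'cV[R]_N) (phi : 'cV[R]_N -> R) :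
  A `<=` range v -> has_lbound [set phi z | z in A] /\ has_ubound [set phi z | z in A].
Proof.
move=> Av.
set B := \sum_(j < m) `|phi (v j)|.
have hB : forall x, [set phi z | z in A] x -> `|x| <= B.
  move=> _ [z Az <-]; have [j _ <-] := Av _ Az.
  rewrite /B (bigD1 j) //= lerDl; apply: sumr_ge0 => k _; exact: normr_ge0.
split.
  exists (- B) => x /hB; rewrite ler_norml => /andP[h _]; exact: h.
exists B => x /hB; rewrite ler_norml => /andP[_ h]; exact: h.
Qed.

Lemma rbox_mem n (em ep e : 'cV[R]_n) : (forall i, em i 0 <= e i 0 <= ep i 0) ->
  czset (zonotope (diag_mx ((2^-1 *: (ep - em))^T)) (2^-1 *: (em + ep))) e.
Proof.
move=> H.
exists (\col_j (if ep j 0 - em j 0 == 0 then 0 else (2 * e j 0 - em j 0 - ep j 0) / (ep j 0 - em j 0))).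
  split; last by rewrite /= mul0mx.
  move=> j; rewrite mxE; case: ifP => [_|/negbT d0]; first by rewrite lerN10 ler01.
  have /andP[h1 h2] := H j.
  have dp : 0 < ep j 0 - em j 0 by rewrite lt_neqAle eq_sym d0 subr_ge0 (le_trans h1 h2).
  rewrite ler_pdivlMr // ler_pdivrMr //; apply/andP; split; lra.
apply/matrixP => i k; rewrite (ord1 k) /= mul_diag_mx !mxE.
have /andP[h1 h2] := H i.
case: ifP => [/eqP d0|/negbT d0]; first by lra.
field; exact: d0.
Qed.

End Misc.
Section CZops.
Variable R : realType.

Lemma cz_point n (c : 'cV[R]_n) : exists C : CZ R n, czset C = [set c].
Proof.
exists (@MkCZ R n 0 0 0 c 0 0).
apply/seteqP; split.
  by move=> _ [xi _ <-] /=; rewrite mul0mx add0r.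
move=> _ -> /=; exists 0; last by rewrite /= mul0mx add0r.
split; first by move=> [m hm]; exfalso; move: hm; rewrite ltn0.
by simpl; rewrite mulmx0.
Qed.

Lemma cz_lin m n (L : 'M[R]_(m, n)) (X : CZ R n) :
  exists C : CZ R m, czset C = lin_img L (czset X).
Proof.
case: X => ng nh G c A b.
exists (@MkCZ R m ng nh (L *m G) (L *m c) A b).
apply/seteqP; split.
  move=> _ [xi Hxi <-] /=; exists (G *m xi + c); first by exists xi.
  by rewrite mulmxDr mulmxA.
move=> _ [_ [xi Hxi <-] <-] /=; exists xi => //.
by rewrite mulmxDr mulmxA.
Qed.

Lemma col_box a b (x : 'cV[R]_(a + b)) :
  (forall j, -1 <= x j 0 <= 1) <->
  (forall j, -1 <= usubmx x j 0 <= 1) /\ (forall j, -1 <= dsubmx x j 0 <= 1).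
Proof.
split.
  by move=> H; split => j; rewrite mxE; apply: H.
move=> [H1 H2] j; rewrite -(splitK j); case: (fintype.split j) => k /=.
  by have := H1 k; rewrite mxE.
by have := H2 k; rewrite mxE.
Qed.

Lemma cz_plus n (X Y : CZ R n) :
  exists C : CZ R n, czset C = mink_sum (czset X) (czset Y).
Proof.
case: X => ng1 nh1 G1 c1 A1 b1; case: Y => ng2 nh2 G2 c2 A2 b2.
exists (@MkCZ R n (ng1 + ng2) (nh1 + nh2) (row_mx G1 G2) (c1 + c2)
   (block_mx A1 0 0 A2) (col_mx b1 b2)).
apply/seteqP; split.
  move=> _ [xi [Hb HA] <-] /=.
  move/col_box: Hb => [Hb1 Hb2].
  move: HA; rewrite -{1}(vsubmxK xi) mul_block_col !mul0mx addr0 add0r => /eq_col_mx [HA1 HA2].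
  exists (G1 *m usubmx xi + c1); first by exists (usubmx xi).
  exists (G2 *m dsubmx xi + c2); first by exists (dsubmx xi).
  rewrite -[in RHS](vsubmxK xi) mul_row_col; apply/matrixP => i k; rewrite !mxE; ring.
move=> _ [_ [xi1 [Hb1 HA1] <-] [_ [xi2 [Hb2 HA2] <-] <-]] /=.
exists (col_mx xi1 xi2).
  split.
    by apply/col_box; rewrite col_mxKu col_mxKd; split.
  by rewrite mul_block_col !mul0mx addr0 add0r HA1 HA2.
rewrite mul_row_col; apply/matrixP => i k; rewrite !mxE; ring.
Qed.

End CZops.
Section Scal.
Variable R : realType.
Variable n : nat.
Implicit Types A B C D E G H I J : 'cV[R]_n.

Lemma sc1 i (t : R) A B C D E G H I J :
  J i 0 <= t * H i 0 + (1 - t) * I i 0 ->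
  - (t *: (A + B) + (1 - t) *: (A + C) - J - (t *: (D + E) + (1 - t) *: (D + G))) i 0
  <= t * - (A + B - H - (D + E)) i 0 + (1 - t) * - (A + C - I - (D + G)) i 0.
Proof. rewrite !mxE => HH; lra. Qed.

Lemma sc2 i (t : R) A B C D E G H I J :
  J i 0 <= t * H i 0 + (1 - t) * I i 0 ->
  (J - (t *: (A + B) + (1 - t) *: (A + C)) - (t *: (D + E) + (1 - t) *: (D + G))) i 0
  <= t * (H - (A + B) - (D + E)) i 0 + (1 - t) * (I - (A + C) - (D + G)) i 0.
Proof. rewrite !mxE => HH; lra. Qed.

Lemma sc3 i A B C D E :
  A i 0 + B i 0 <= C i 0 ->
  (A + B - D - E) i 0 <= (C - D - E) i 0.
Proof. rewrite !mxE => HH; lra. Qed.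

Lemma sc4 i A B C D E :
  A i 0 + B i 0 <= D i 0 ->
  (C - D - E) i 0 <= (C - (A + B) - E) i 0.
Proof. rewrite !mxE => HH; lra. Qed.

End Scal.
Lemma aff_comb (R : realType) N n (c : 'cV[R]_n) (M : 'M[R]_(n, N)) zb z1 z2 (t : R) :
  c + M *m (t *: z1 + (1 - t) *: z2 - zb) =
  t *: (c + M *m (z1 - zb)) + (1 - t) *: (c + M *m (z2 - zb)).
Proof.
have -> : t *: z1 + (1 - t) *: z2 - zb = t *: (z1 - zb) + (1 - t) *: (z2 - zb).
  by apply/matrixP => a b; rewrite !mxE; ring.
rewrite mulmxDr -!scalemxAr; apply/matrixP => a b; rewrite !mxE; ring.
Qed.

Unset Implicit Arguments.

Theorem theorem1 (R : realType) (n p q : nat)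
  (X : CZ R n) (W : CZ R q) (u : 'cV[R]_p)
  (f : 'cV[R]_n -> 'cV[R]_p -> 'cV[R]_q -> 'cV[R]_n)
  (P : set 'cV[R]_(n + (p + q)))
  (fa fb : 'cV[R]_(n + (p + q)) -> 'cV[R]_n)
  (xbar : 'cV[R]_n) (wbar : 'cV[R]_q) :
  let rho := fun z : 'cV[R]_(n + (p + q)) =>
    f (usubmx z) (usubmx (dsubmx z)) (dsubmx (dsubmx z)) in
  let Z := [set col_mx x (col_mx u w) | x in czset X & w in czset W] in
  let zbar := col_mx xbar (col_mx u wbar) in
  let F := jac rho zbar in
  let Fx : 'M[R]_(n, n) := lsubmx F in
  let Fw : 'M[R]_(n, q) := rsubmx (rsubmx F : 'M[R]_(n, p + q)) in
  let rbar := fun z => rho zbar + F *m (z - zbar) in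
  let rbara := fun z => fa zbar + jac fa zbar *m (z - zbar) in
  let rbarb := fun z => fb zbar + jac fb zbar *m (z - zbar) in
  let em : 'cV[R]_n := \col_i inf [set (rbara z - fb z - rbar z) i 0 | z in vert P] in
  let ep : 'cV[R]_n := \col_i sup [set (fa z - rbarb z - rbar z) i 0 | z in vert P] in
  let Rbox := zonotope (diag_mx ((2^-1 *: (ep - em))^T)) (2^-1 *: (em + ep)) in
  let Xpred := mink_sum (mink_sum (mink_sum (set1 (rho zbar - Fx *m xbar - Fw *m wbar))
                                (lin_img Fx (czset X)))
                          (lin_img Fw (czset W)))
                    (czset Rbox) in
  polytope P -> Z `<=` P ->
  (forall z, P z -> rho z = fa z - fb z) ->
  (forall z, P z -> differentiable fa z) ->
  (forall z, P z -> differentiable fb z) ->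
  cw_convex_on fa P -> cw_convex_on fb P ->
  P zbar ->
  [set f x u w | x in czset X & w in czset W] `<=` Xpred /\
  exists C : CZ R n, czset C = Xpred.
Proof.
move=> rho Z zbar F Fx Fw rbar rbara rbarb em ep Rbox Xpred polyP ZP rhoE dfa dfb
  cva cvb Pzb.
split; last first.
  have [C1 E1] := cz_point (rho zbar - Fx *m xbar - Fw *m wbar).
  have [C2 E2] := cz_lin Fx X.
  have [C3 E3] := cz_lin Fw W.
  have [C12 E12] := cz_plus C1 C2; rewrite E1 E2 in E12.
  have [C123 E123] := cz_plus C12 C3; rewrite E12 E3 in E123.
  have [C E] := cz_plus C123 Rbox; rewrite E123 in E.
  by exists C.
have [V PV] := polyP.
rewrite seq_family in PV.
have [m [v [Ev Vv]]] := vert_family (fun i : 'I_(size V) => nth 0 V i).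
rewrite -PV in Vv; rewrite Ev in PV.
have vertR : vert P `<=` range v by rewrite PV; move=> y; exact: vert_range.
have bnd : forall z, P z -> forall i, em i 0 <= (rho z - rbar z) i 0 <= ep i 0.
  move=> z Pz i.
  have gfa := grad_ineq i (dfa _ Pzb) cva Pzb Pz.
  have gfb := grad_ineq i (dfb _ Pzb) cvb Pzb Pz.
  have rz := rhoE z Pz.
  apply/andP; split.
    set g := fun y => (rbara y - fb y - rbar y) i 0.
    have [lb _] := fin_bounds g vertR.
    have cvxg : forall z1 z2 t, conv_hull (range v) z1 -> conv_hull (range v) z2 ->
        0 <= t <= 1 -> - g (t *: z1 + (1 - t) *: z2) <= t * - g z1 + (1 - t) * - g z2.
      move=> z1 z2 t P1 P2 t01.
      rewrite -PV in P1 P2.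
      have := cvb i z1 z2 t P1 P2 t01.
      rewrite /g /rbara /rbar !aff_comb; exact: sc1.
    have [j hj] := max_principle cvxg (eq_ind _ (fun S => S z) Pz _ PV).
    rewrite /em mxE.
    apply: le_trans (ge_inf lb _) _; first by exists (v j).
    have e1 : g z <= (rho z - rbar z) i 0.
      by rewrite /g rz /rbara; apply: sc3.
    apply: le_trans e1; by rewrite -lerN2.
  set h := fun y => (fa y - rbarb y - rbar y) i 0.
  have [_ ub] := fin_bounds h vertR.
  have cvxh : forall z1 z2 t, conv_hull (range v) z1 -> conv_hull (range v) z2 ->
      0 <= t <= 1 -> h (t *: z1 + (1 - t) *: z2) <= t * h z1 + (1 - t) * h z2.
    move=> z1 z2 t P1 P2 t01.
    rewrite -PV in P1 P2.
    have := cva i z1 z2 t P1 P2 t01.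
    rewrite /h /rbarb /rbar !aff_comb; exact: sc2.
  have [j hj] := max_principle cvxh (eq_ind _ (fun S => S z) Pz _ PV).
  rewrite /ep [X in _ <= X]mxE.
  apply: le_trans _ (ub_le_sup ub _); last by exists (v j).
  have e1 : (rho z - rbar z) i 0 <= h z.
    by rewrite /h rz /rbarb; apply: sc4.
  exact: le_trans e1 hj.
move=> _ [x Xx [w Ww <-]].
set z := col_mx x (col_mx u w).
have Pz : P z by apply: ZP; exists x => //; exists w.
have rz : rho z = f x u w by rewrite /rho /z col_mxKu col_mxKd col_mxKu col_mxKd.
have rbz : rbar z = (rho zbar - Fx *m xbar - Fw *m wbar) + Fx *m x + Fw *m w.
  have hF : F = row_mx Fx (row_mx (lsubmx (rsubmx F)) Fw) by rewrite /Fx /Fw !hsubmxK.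
  have hz : z - zbar = col_mx (x - xbar) (col_mx 0 (w - wbar)).
    by rewrite /z /zbar opp_col_mx add_col_mx opp_col_mx add_col_mx subrr.
  rewrite /rbar hz hF mul_row_col mul_row_col mulmx0 add0r !mulmxBr.
  by apply/matrixP => a b; rewrite !mxE; ring.
exists (rho zbar - Fx *m xbar - Fw *m wbar + Fx *m x + Fw *m w).
  exists (rho zbar - Fx *m xbar - Fw *m wbar + Fx *m x).
    exists (rho zbar - Fx *m xbar - Fw *m wbar) => //.
    by exists (Fx *m x) => //; exists x.
  by exists (Fw *m w) => //; exists w.
exists (rho z - rbar z); first exact: rbox_mem (bnd z Pz).
by rewrite -rbz -rz addrC subrK.
Qed.
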